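(* $\mathfrak{L}(\mathbf{H})^w_{O(n)} \subsetneq \mathfrak{L}(SL(3,\mathbb{Z}))^w_{O(n)}$.
   Context: For a group $G$ with identity $e$, a $G$-automaton is a tuple $(Q,\Sigma,G,\delta,q_0,Q_a)$ where $Q$ is a finite set of states, $\Sigma$ a finite input alphabet, $q_0\in Q$ the initial state, $Q_a\subseteq Q$ the accepting states, and $\delta$ assigns to each $(q,\sigma)\in Q\times(\Sigma\cup\{\varepsilon\})$ a finite set of pairs $(q',m)\in Q\times G$. The register holds an element of $G$, initially $e$; using a transition $(q',m)\in\delta(q,\sigma)$ (one step) the automaton reads $\sigma$ (or nothing), moves to $q'$ and replaces the register content $x$ by $xm$. A word is accepted if some computation reads it entirely and ends in an accepting state with register equal to $e$. A $G$-automaton recognizing $\mathtt{L}$ is weakly $t(n)$ time-bounded if every $x\in\mathtt{L}$ with $|x|=n$ has an accepting computation of at most $t(n)$ steps; $\mathfrak{L}(G)^w_{O(n)}$ is the class of languages recognized by weakly $t(n)$ time-bounded $G$-automata for some $t(n)=O(n)$. $\mathbf{H}$ is the discrete Heisenberg group of $3\times3$ upper unitriangular integer matrices (presentation $\langle a,b\mid ab=bac, ac=ca, bc=cb\rangle$, $c=a^{-1}b^{-1}ab$); $SL(3,\mathbb{Z})$ is the group of $3\times3$ integer matrices of determinant $1$. *)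

(* Defs.v *)
From HB Require Import structures.
From mathcomp Require Import all_boot all_order all_algebra.
Set Implicit Arguments. Unset Strict Implicit. Unset Printing Implicit Defensive.
Import Order.TTheory GRing.Theory Num.Theory.

Local Open Scope ring_scope.

Definition mx3 := 'M[int]_3.

Definition heisenberg (m : mx3) : bool :=
  [forall i : 'I_3, forall j : 'I_3,
     ((j < i)%N ==> (m i j == 0)) && ((i == j) ==> (m i j == 1))].

Definition sl3Z (m : mx3) : bool := \det m == 1.

(* A G-automaton over alphabet Sigma with register in 3x3 integer matrices.
   A transition (q, s, q', m) : from q, reading s (None = epsilon),
   go to q' and multiply the register on the right by m. *)
Record gauto (Sigma : finType) := GAuto {
  gstate : finType;
  ginit : gstate;
  gacc : pred gstate;
  gdelta : seq (gstate * option Sigma * gstate * mx3)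
}.

Section Runs.
Variables (Sigma : finType) (A : gauto Sigma).

Fixpoint chain_from (q : gstate A)
    (p : seq (gstate A * option Sigma * gstate A * mx3)) : bool :=
  match p with
  | [::] => @gacc Sigma A q
  | t :: p' => (t.1.1.1 == q) && chain_from t.1.2 p'
  end.

Definition accepting_comp (w : seq Sigma)
    (p : seq (gstate A * option Sigma * gstate A * mx3)) : Prop :=
  [/\ all (fun t => t \in @gdelta Sigma A) p,
      chain_from (@ginit Sigma A) p,
      pmap (fun t => t.1.1.2) p = w &
      foldl (fun x t => x *m t.2) 1%:M p = 1%:M].

Definition accepts (w : seq Sigma) : Prop := exists p, accepting_comp w p.
End Runs.

(* L is in L(G)^w_{O(n)}: recognized by a G-automaton (all transition labels
   in G) admitting a linear time bound t(n) <= c*n + c for words of L. *)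
Definition in_weak_linear_class (G : pred mx3) (Sigma : finType)
    (L : seq Sigma -> Prop) : Prop :=
  exists A : gauto Sigma,
    (forall t, t \in @gdelta Sigma A -> G t.2) /\
    (forall w, L w <-> @accepts Sigma A w) /\
    exists c : nat, forall w, L w ->
      exists p, @accepting_comp Sigma A w p /\ (size p <= c * size w + c)%N.

(* Main.v *)
Require Import Defs.
From mathcomp Require Import all_boot all_order all_algebra.
From mathcomp Require Import zify ring lra.
Set Implicit Arguments. Unset Strict Implicit. Unset Printing Implicit Defensive.
Import Order.TTheory GRing.Theory Num.Theory.
Lemma exp_beats (E : nat) : exists n, E * (n.+1)^4 < 2^n.
Proof.
set t := (6561 * E).+1.
exists (8 * t).
have ht : t < 2 ^ t by apply: ltn_expl.
have h1 : (8 * t).+1 ^ 4 <= (9 * t) ^ 4 by rewrite leq_exp2r //; lia.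
rewrite expnMn in h1.
have h2 : 2 ^ (8 * t) = (2 ^ t) ^ 8 by rewrite mulnC expnM.
rewrite h2.
set x := 2 ^ t in ht *.
have h3 : t ^ 8 < x ^ 8 by rewrite ltn_exp2r.
have h4 : t ^ 8 = t ^ 4 * t ^ 4 by rewrite -expnD.
have h5 : 1 <= t by [].
have h6 : t <= t ^ 4 by rewrite -{1}(expn1 t) leq_pexp2l.
set y := t ^ 4 in h1 h4 h6.
have h7 : E * (9 ^ 4 * y) < t * y.
  rewrite mulnA ltn_pmul2r; first by rewrite /t (_ : 9 ^ 4 = 6561) //; lia.
  by rewrite /y expn_gt0 h5.
apply: (leq_ltn_trans (leq_mul (leqnn E) h1)).
apply: (ltn_trans h7); apply: (leq_ltn_trans _ h3); rewrite h4.
by apply: leq_mul.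
Qed.

Lemma poly_bound (Q c M n K k0 : nat) :
  K = c * (2 * n) + c -> k0 = 3 * c + 1 ->
  Q * (2 * (K * M)).+1 * (2 * (K * M)).+1 * (2 * (K * M + K * K * (M * M))).+1 <=
  (Q * (2 * k0 * M).+1 * (2 * k0 * M).+1 * (2 * (k0 * M + k0 * k0 * (M * M))).+1) * (n.+1) ^ 4.
Proof.
move=> eK ek0.
have hK : K <= k0 * n.+1 by rewrite eK ek0; lia.
have ha : (2 * (K * M)).+1 <= (2 * k0 * M).+1 * n.+1 by nia.
have hb : (2 * (K * M + K * K * (M * M))).+1 <=
          (2 * (k0 * M + k0 * k0 * (M * M))).+1 * (n.+1 * n.+1) by nia.
have := leq_mul (leq_mul (leq_mul (leqnn Q) ha) ha) hb.
move=> H; apply: (leq_trans H); apply: eq_leq.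
rewrite !expnS expn0; ring.
Qed.

Local Open Scope ring_scope.

Definition i0 : 'I_3 := @Ordinal 3 0 isT.
Definition i1 : 'I_3 := @Ordinal 3 1 isT.
Definition i2 : 'I_3 := @Ordinal 3 2 isT.

Lemma ord3P (i : 'I_3) : [\/ i = i0, i = i1 | i = i2].
Proof.
case: i => [[|[|[|k]]] Hk].
- by apply: Or31; apply: val_inj.
- by apply: Or32; apply: val_inj.
- by apply: Or33; apply: val_inj.
- by [].
Qed.

Lemma mul3E (A B : mx3) i j :
  (A *m B) i j = A i i0 * B i0 j + A i i1 * B i1 j + A i i2 * B i2 j.
Proof.
rewrite mxE !big_ord_recl big_ord0 addr0 addrA.
by congr (A i _ * B _ j + A i _ * B _ j + A i _ * B _ j); apply: val_inj.
Qed.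

Lemma heisP (m : mx3) : heisenberg m ->
  [/\ m i0 i0 = 1, m i1 i1 = 1, m i2 i2 = 1 &
   [/\ m i1 i0 = 0, m i2 i0 = 0 & m i2 i1 = 0]].
Proof.
move=> /forallP H.
have G (i j : 'I_3) : ((j < i)%N ==> (m i j == 0)) && ((i == j) ==> (m i j == 1)).
  by have /forallP := H i; apply.
have E (i j : 'I_3) : (j < i)%N -> m i j = 0.
  by move=> Hl; move: (G i j) => /andP[/implyP A _]; apply/eqP; apply: A.
have D (i : 'I_3) : m i i = 1.
  by move: (G i i) => /andP[_ /implyP B]; apply/eqP; apply: B.
by split; [apply: D|apply: D|apply: D|split; apply: E].
Qed.

Lemma heis_det (m : mx3) : heisenberg m -> \det m = 1.
Proof.
move=> Hm; have [h0 h1 h2 [h10 h20 h21]] := heisP Hm.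
rewrite -det_tr det_trig.
  rewrite !big_ord_recl big_ord0 !mxE.
  have -> : lift ord0 (@ord0 1) = i1 by apply: val_inj.
  have -> : lift ord0 (lift ord0 (@ord0 0)) = i2 by apply: val_inj.
  have -> : (@ord0 2) = i0 by apply: val_inj.
  by rewrite h0 h1 h2 !mulr1.
apply/is_trig_mxP => i j Hij; rewrite mxE.
by case: (ord3P i) Hij => ->; case: (ord3P j) => ->.
Qed.

Definition E01 : mx3 := delta_mx i0 i1.
Definition E10 : mx3 := delta_mx i1 i0.
Definition Xm : mx3 := 1%:M + E01.
Definition Xim : mx3 := 1%:M - E01.
Definition Ym : mx3 := 1%:M + E10.
Definition Yim : mx3 := 1%:M - E10.

Lemma heisX : heisenberg Xm.
Proof.
apply/forallP => i; apply/forallP => j.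
by case: (ord3P i) => ->; case: (ord3P j) => ->; rewrite !mxE.
Qed.
Lemma heisXi : heisenberg Xim.
Proof.
apply/forallP => i; apply/forallP => j.
by case: (ord3P i) => ->; case: (ord3P j) => ->; rewrite !mxE.
Qed.
Lemma detY : \det Ym = 1.
Proof.
rewrite -det_tr; apply: heis_det; apply/forallP => i; apply/forallP => j.
by case: (ord3P i) => ->; case: (ord3P j) => ->; rewrite !mxE.
Qed.
Lemma detYi : \det Yim = 1.
Proof.
rewrite -det_tr; apply: heis_det; apply/forallP => i; apply/forallP => j.
by case: (ord3P i) => ->; case: (ord3P j) => ->; rewrite !mxE.
Qed.

Lemma E01sq : E01 *m E01 = 0.
Proof. by rewrite /E01 mul_delta_mx_0. Qed.
Lemma E10sq : E10 *m E10 = 0.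
Proof. by rewrite /E10 mul_delta_mx_0. Qed.
Lemma XXi : Xm *m Xim = 1%:M.
Proof. by rewrite /Xm /Xim mulmxDl mulmxBr !mul1mx mulmxBr mulmx1 E01sq subr0 subrK. Qed.
Lemma YYi : Ym *m Yim = 1%:M.
Proof. by rewrite /Ym /Yim mulmxDl mulmxBr !mul1mx mulmxBr mulmx1 E10sq subr0 subrK. Qed.

Lemma XmE (P : mx3) i : (P *m Xm) i i0 = P i i0 /\ (P *m Xm) i i1 = P i i1 + P i i0.
Proof. by rewrite !mul3E !mxE /=; split; ring. Qed.
Lemma YmE (P : mx3) i : (P *m Ym) i i1 = P i i1 /\ (P *m Ym) i i0 = P i i0 + P i i1.
Proof. by rewrite !mul3E !mxE /=; split; ring. Qed.

Definition Nm (l : 'I_4) : mx3 :=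
  match val l with 0%N => Xm | 1%N => Ym | 2%N => Xim | _ => Yim end.
Definition enc (b : bool) : 'I_4 := if b then @Ordinal 4 1 isT else @Ordinal 4 0 isT.
Definition invl (b : bool) : 'I_4 := if b then @Ordinal 4 3 isT else @Ordinal 4 2 isT.

Lemma enc_invl b : Nm (enc b) *m Nm (invl b) = 1%:M.
Proof. by case: b; [exact: YYi | exact: XXi]. Qed.

Lemma detNm l : \det (Nm l) = 1.
Proof.
rewrite /Nm; case: l => [[|[|[|[|k]]]] Hk] //=.
- exact: heis_det heisX.
- exact: detY.
- exact: heis_det heisXi.
- exact: detYi.
Qed.

Definition Aut : gauto 'I_4 :=
  @GAuto 'I_4 unit tt predT [seq (tt, Some l, tt, Nm l) | l <- enum 'I_4].

Definition fA (x : mx3) (l : 'I_4) := x *m Nm l.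
Definition stepf {Q : Type} (x : mx3) (t : Q * option 'I_4 * Q * mx3) := x *m t.2.

Lemma inA (t : gstate Aut * option 'I_4 * gstate Aut * mx3) :
  t \in gdelta Aut -> exists l, t.1.1.2 = Some l /\ t.2 = Nm l.
Proof. by case/mapP => l _ ->; exists l. Qed.

Lemma foldA (p : seq (gstate Aut * option 'I_4 * gstate Aut * mx3)) x :
  all (fun t => t \in gdelta Aut) p ->
  foldl (fun x t => x *m t.2) x p = foldl fA x (pmap (fun t => t.1.1.2) p).
Proof.
elim: p x => [|t p IH] x //= /andP[/inA [l [H1 H2]] Hp].
by rewrite H1 H2 /=; apply: IH.
Qed.

Definition compA (w : seq 'I_4) : seq (gstate Aut * option 'I_4 * gstate Aut * mx3) :=
  [seq (tt, Some l, tt, Nm l) | l <- w].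

Lemma compA_ok w : foldl fA 1%:M w = 1%:M -> accepting_comp w (compA w).
Proof.
move=> H; split.
- by apply/allP => t /mapP [l _ ->]; apply: map_f; rewrite mem_enum.
- by elim: w {H} => [|l w IH] //=.
- by elim: w {H} => [|l w IH] //=; rewrite IH.
- have G x : foldl (fun x t => x *m t.2) x (compA w) = foldl fA x w.
    by elim: w x {H} => [|l w IH] x //=; rewrite IH.
  by rewrite G.
Qed.

Lemma accA w : accepts Aut w <-> foldl fA 1%:M w = 1%:M.
Proof.
split; last by move=> H; exists (compA w); exact: compA_ok.
by case=> p [Hall _ Hw Hf]; rewrite -Hw -foldA.
Qed.

Lemma A_class : in_weak_linear_class sl3Z (accepts Aut).
Proof.
exists Aut; split; first by move=> t /mapP [l _ ->]; apply/eqP; exact: detNm.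
split; first by [].
exists 1%N => w /accA H; exists (compA w); split; first exact: compA_ok.
by rewrite size_map mul1n leq_addr.
Qed.

Definition Mw (u : seq bool) : mx3 := foldl fA 1%:M (map enc u).
Definition s0 (P : mx3) := P i0 i0 + P i1 i0.
Definition s1 (P : mx3) := P i0 i1 + P i1 i1.

Lemma Mw_rcons u b : Mw (rcons u b) = Mw u *m Nm (enc b).
Proof. by rewrite /Mw map_rcons foldl_rcons. Qed.

Lemma s_step P b : 
  (s0 (P *m Nm (enc b)), s1 (P *m Nm (enc b))) =
  if b then (s0 P + s1 P, s1 P) else (s0 P, s1 P + s0 P).
Proof.
case: b => /=.
- by have [a1 a2] := YmE P i0; have [b1 b2] := YmE P i1;
     rewrite /s0 /s1 a1 a2 b1 b2; congr (_, _); ring.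
- by have [a1 a2] := XmE P i0; have [b1 b2] := XmE P i1;
     rewrite /s0 /s1 a1 a2 b1 b2; congr (_, _); ring.
Qed.

Lemma s_pos u : 1 <= s0 (Mw u) /\ 1 <= s1 (Mw u).
Proof.
elim/last_ind: u => [|u b [H0 H1]].
  by rewrite /Mw /= /s0 /s1 !mxE.
rewrite Mw_rcons; have := s_step (Mw u) b.
case: b => [] [-> ->]; split => //; lra.
Qed.

Lemma s_last u b :
  if b then s1 (Mw (rcons u b)) < s0 (Mw (rcons u b))
  else s0 (Mw (rcons u b)) < s1 (Mw (rcons u b)).
Proof.
rewrite Mw_rcons; have [H0 H1] := s_pos u; have := s_step (Mw u) b.
case: b => [] [-> ->]; lra.
Qed.

Lemma s_nil : s0 (Mw [::]) = s1 (Mw [::]).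
Proof. by rewrite /Mw /= /s0 /s1 !mxE. Qed.

Lemma Mw_inj u u' : Mw u = Mw u' -> u = u'.
Proof.
elim/last_ind: u u' => [|u b IH] u'; case/lastP: u' => [|u' b'] //.
- move=> E; have := s_last u' b'; rewrite -E s_nil.
  by case: b' E; rewrite /= ltxx.
- move=> E; have := s_last u b; rewrite E s_nil.
  by case: b E IH; rewrite /= ltxx.
move=> E.
have Hb : b = b'.
  have := s_last u b; have := s_last u' b'; rewrite E.
  case: b E IH; case: b' => //= _ _ H1 H2; have := lt_trans H1 H2; by rewrite ltxx.
move: E; rewrite -Hb {Hb} => E; congr rcons; apply: IH.
move: E; rewrite !Mw_rcons => /(congr1 (fun M => M *m Nm (invl b))).
by rewrite -!mulmxA enc_invl !mulmx1.
Qed.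

Lemma foldl_mul s y : foldl fA y s = y *m foldl fA 1%:M s.
Proof.
elim: s y => [|l s IH] y /=; first by rewrite mulmx1.
by rewrite IH [in RHS]IH /fA mul1mx mulmxA.
Qed.

Lemma fold_inv s y : foldl fA (foldl fA y (map enc s)) (rev (map invl s)) = y.
Proof.
elim: s y => [|b s IH] y //=.
by rewrite rev_cons foldl_rcons IH /fA -mulmxA enc_invl mulmx1.
Qed.

Definition wuv (u v : seq bool) : seq 'I_4 := map enc u ++ rev (map invl v).

Lemma A_wuu u : accepts Aut (wuv u u).
Proof. by apply/accA; rewrite /wuv foldl_cat fold_inv. Qed.

Lemma A_wuv u v : accepts Aut (wuv u v) -> u = v.
Proof.
move/accA; rewrite /wuv foldl_cat foldl_mul => H1.
have H2 := fold_inv v 1%:M; rewrite foldl_mul in H2.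
apply: Mw_inj.
set Q := foldl fA 1%:M (rev (map invl v)) in H1 H2 *.
have H3 := mulmx1C H2.
rewrite -[Mw u]mulmx1 -H3 mulmxA.
by rewrite [Mw u *m Q]H1 mul1mx.
Qed.

Definition trans (Sigma : finType) (B : gauto Sigma) :=
  (gstate B * option Sigma * gstate B * mx3)%type.

Lemma split_comp (Sigma : finType) (B : gauto Sigma) (p : seq (trans B)) x y :
  pmap (fun t => t.1.1.2) p = x ++ y ->
  exists p1 p2, [/\ p = p1 ++ p2, pmap (fun t => t.1.1.2) p1 = x &
                    pmap (fun t => t.1.1.2) p2 = y].
Proof.
elim: p x => [|t p IH] x /=.
  by case: x => // /esym /eqP; rewrite /= => /eqP ->; exists [::], [::].
case: t => [[[q o] q'] m] /=; case: o => [a|] /=.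
- case: x => [|b x] /= H.
    by exists [::], ((q, Some a, q', m) :: p); split.
  case: H => Hab /IH [p1 [p2 [-> H1 H2]]]; subst b.
  by exists ((q, Some a, q', m) :: p1), p2; split => //=; rewrite H1.
- case/IH => [p1 [p2 [-> H1 H2]]].
  by exists ((q, None, q', m) :: p1), p2; split.
Qed.

Fixpoint chain_pre (Sigma : finType) (B : gauto Sigma) (q : gstate B) (p : seq (trans B)) : bool :=
  match p with [::] => true | t :: p' => (t.1.1.1 == q) && chain_pre t.1.2 p' end.
Fixpoint endst (Sigma : finType) (B : gauto Sigma) (q : gstate B) (p : seq (trans B)) : gstate B :=
  match p with [::] => q | t :: p' => endst t.1.2 p' end.

Lemma chain_cat (Sigma : finType) (B : gauto Sigma) q (p1 p2 : seq (trans B)) :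
  chain_from q (p1 ++ p2) = chain_pre q p1 && chain_from (endst q p1) p2.
Proof. by elim: p1 q => [|t p1 IH] q //=; rewrite IH andbA. Qed.

Definition Mb (Sigma : finType) (B : gauto Sigma) : nat :=
  foldr (fun (t : trans B) acc => (acc + absz (t.2 i0 i1) + absz (t.2 i1 i2) + absz (t.2 i0 i2))%N)
    0%N (gdelta B).

Lemma Mb_ge (Sigma : finType) (B : gauto Sigma) t : t \in gdelta B ->
  [/\ (absz (t.2 i0 i1) <= Mb B)%N, (absz (t.2 i1 i2) <= Mb B)%N & (absz (t.2 i0 i2) <= Mb B)%N].
Proof.
rewrite /Mb; elim: (gdelta B) => [|t' s IH] //=.
have L1 (X a b c : nat) : [/\ a <= X + a + b + c, b <= X + a + b + c & c <= X + a + b + c]%N.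
  by split; lia.
have L2 (x X a b c : nat) : (x <= X -> x <= X + a + b + c)%N by lia.
rewrite in_cons => /orP [/eqP ->|/IH [H1 H2 H3]]; first exact: L1.
by split; apply: L2.
Qed.

Definition hf (m : mx3) :=
  [/\ m i0 i0 = 1, m i1 i1 = 1, m i2 i2 = 1 &
   [/\ m i1 i0 = 0, m i2 i0 = 0 & m i2 i1 = 0]].

Lemma aux1 (a b : int) (k M : nat) :
  (absz a <= M)%N -> (absz b <= k * M)%N -> (absz (a + b)%R <= k.+1 * M)%N.
Proof. lia. Qed.
Lemma aux2 (a b c : int) (k M : nat) :
  (absz a <= M)%N -> (absz b <= k * M * M)%N -> (absz c <= k * M + k * k * (M * M))%N ->
  (absz (a + b + c)%R <= k.+1 * M + k.+1 * k.+1 * (M * M))%N.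
Proof. nia. Qed.

Lemma hbound (Sigma : finType) (B : gauto Sigma)
  (HB : forall t, t \in gdelta B -> heisenberg t.2) (p : seq (trans B)) :
  all (fun t => t \in gdelta B) p ->
  let R := foldl (fun x t => x *m t.2) 1%:M p in
  [/\ hf R, (absz (R i0 i1) <= size p * Mb B)%N, (absz (R i1 i2) <= size p * Mb B)%N &
      (absz (R i0 i2) <= size p * Mb B + size p * size p * (Mb B * Mb B))%N].
Proof.
elim/last_ind: p => [|p t IH].
  by move=> _; rewrite /= /hf !mxE /=.
rewrite all_rcons => /andP [Ht /IH [[r00 r11 r22 [r10 r20 r21]] b01 b12 b02]].
rewrite foldl_rcons size_rcons.
set R := foldl _ _ p in r00 r11 r22 r10 r20 r21 b01 b12 b02 *.
have [t00 t11 t22 [t10 t20 t21]] := heisP (HB _ Ht).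
have [m01 m12 m02] := Mb_ge Ht.
set M := Mb B in m01 m12 m02 b01 b12 b02 *.
set T := t.2 in t00 t11 t22 t10 t20 t21 m01 m12 m02 *.
have e01 : (R *m T) i0 i1 = T i0 i1 + R i0 i1.
  by rewrite mul3E r00 t11 t21; ring.
have e12 : (R *m T) i1 i2 = T i1 i2 + R i1 i2.
  by rewrite mul3E r10 r11 t22; ring.
have e02 : (R *m T) i0 i2 = T i0 i2 + R i0 i1 * T i1 i2 + R i0 i2.
  by rewrite mul3E r00 t22; ring.
have hm : (absz (R i0 i1 * T i1 i2)%R <= size p * M * M)%N.
  by rewrite abszM; apply: leq_mul.
clearbody R T M.
split.
- by rewrite /hf; split; [ | | | split]; rewrite mul3E; rewrite ?r00 ?r11 ?r22 ?r10 ?r20 ?r21 ?t00 ?t11 ?t22 ?t10 ?t20 ?t21; ring.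
- by rewrite e01; apply: aux1.
- by rewrite e12; apply: aux1.
- by rewrite e02; apply: aux2.
Qed.

From Stdlib Require Import IndefiniteDescription.

Lemma aux3 (a b : int) (N : nat) : (absz a <= N)%N -> (absz b <= N)%N ->
  absz (a + N%:Z)%R = absz (b + N%:Z)%R -> a = b.
Proof. lia. Qed.

Lemma aux3b (a : int) (N : nat) : (absz a <= N)%N -> (absz (a + N%:Z)%R < (2 * N).+1)%N.
Proof. lia. Qed.

Lemma hf_eq (R R' : mx3) : hf R -> hf R' -> R i0 i1 = R' i0 i1 -> R i1 i2 = R' i1 i2 ->
  R i0 i2 = R' i0 i2 -> R = R'.
Proof.
move=> [a0 a1 a2 [a3 a4 a5]] [b0 b1 b2 [b3 b4 b5]] e1 e2 e3.
apply/matrixP => i j.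
by case: (ord3P i) => ->; case: (ord3P j) => ->; rewrite ?a0 ?a1 ?a2 ?a3 ?a4 ?a5 ?b0 ?b1 ?b2 ?b3 ?b4 ?b5.
Qed.

Lemma H_not : ~ in_weak_linear_class heisenberg (accepts Aut).
Proof.
case=> B [HB [Heq [c Hc]]].
set M := Mb B.
set k0 := (3 * c + 1)%N.
set E := (#|gstate B| * (2 * k0 * M).+1 * (2 * k0 * M).+1 *
          (2 * (k0 * M + k0 * k0 * (M * M))).+1)%N.
have [n Hn] := exp_beats E.
set K := (c * (2 * n) + c)%N.
set N1 := (K * M)%N.
set N2 := (K * M + K * K * (M * M))%N.
pose P (u : n.-tuple bool) (cfg : gstate B * mx3) :=
  exists p1 p2 : seq (trans B), [/\ @accepting_comp _ B (wuv u u) (p1 ++ p2),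
     pmap (fun t => t.1.1.2) p1 = map enc u,
     pmap (fun t => t.1.1.2) p2 = rev (map invl u),
     (size (p1 ++ p2) <= K)%N &
     cfg = (endst (ginit B) p1, foldl (fun x t => x *m t.2) 1%:M p1)].
have Hex u : exists cfg, P u cfg.
  have [p [Hp Hs]] := Hc _ (A_wuu u).
  have [_ _ Hpm _] := Hp.
  have [p1 [p2 [Ep H1 H2]]] := split_comp Hpm.
  exists (endst (ginit B) p1, foldl (fun x t => x *m t.2) 1%:M p1), p1, p2.
  rewrite -Ep; split => //.
  by move: Hs; rewrite /wuv size_cat size_rev !size_map size_tuple addnn -mul2n.
pose g u := proj1_sig (constructive_indefinite_description _ (Hex u)).
have Hg u : P u (g u) := proj2_sig (constructive_indefinite_description _ (Hex u)).
have ginj u u' : g u = g u' -> u = u'.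
  move=> E0.
  have [p1 [p2 [[Ha Hch Hpm Hf] H1 H2 _ Hcfg]]] := Hg u.
  have [p1' [p2' [[Ha' Hch' Hpm' Hf'] H1' H2' _ Hcfg']]] := Hg u'.
  rewrite Hcfg Hcfg' in E0; case: E0 => Eq Ef.
  have Hacc : accepts B (wuv u u').
    exists (p1 ++ p2'); split.
    - by move: Ha Ha'; rewrite !all_cat => /andP[-> _] /andP[_ ->].
    - by move: Hch Hch'; rewrite !chain_cat Eq => /andP[-> _] /andP[_ ->].
    - by rewrite pmap_cat H1 H2'.
    - by rewrite foldl_cat Ef -foldl_cat.
  by apply: val_inj; apply: A_wuv; apply/Heq.
have gb u : [/\ hf (g u).2, (absz ((g u).2 i0 i1) <= N1)%N,
               (absz ((g u).2 i1 i2) <= N1)%N & (absz ((g u).2 i0 i2) <= N2)%N].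
  have [p1 [p2 [[Ha _ _ _] _ _ Hs Hcfg]]] := Hg u.
  rewrite Hcfg /=.
  move: Ha; rewrite all_cat => /andP [Ha1 _].
  have [h b1 b2 b3] := hbound HB Ha1.
  have hs : (size p1 <= K)%N by apply: leq_trans Hs; rewrite size_cat leq_addr.
  split => //.
  - exact: (leq_trans b1 (leq_mul hs (leqnn M))).
  - exact: (leq_trans b2 (leq_mul hs (leqnn M))).
  - apply: (leq_trans b3); apply: leq_add; first exact: leq_mul.
    by apply: leq_mul => //; apply: leq_mul.
pose code (x : gstate B * mx3) : gstate B * 'I_(2 * N1).+1 * 'I_(2 * N1).+1 * 'I_(2 * N2).+1 :=
  (x.1, inord (absz (x.2 i0 i1 + N1%:Z)), inord (absz (x.2 i1 i2 + N1%:Z)),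
   inord (absz (x.2 i0 i2 + N2%:Z))).
pose h u := code (g u).
have hinj : injective h.
  move=> u u'; rewrite /h /code => -[e0 e1 e2 e3].
  have [hu a1 a2 a3] := gb u; have [hu' a1' a2' a3'] := gb u'.
  move/(congr1 (@nat_of_ord _)): e1; rewrite !inordK ?aux3b // => /(aux3 a1 a1') e1.
  move/(congr1 (@nat_of_ord _)): e2; rewrite !inordK ?aux3b // => /(aux3 a2 a2') e2.
  move/(congr1 (@nat_of_ord _)): e3; rewrite !inordK ?aux3b // => /(aux3 a3 a3') e3.
  apply: ginj; rewrite [g u]surjective_pairing [g u']surjective_pairing e0.
  by congr pair; apply: hf_eq.
have := leq_card h hinj; rewrite card_tuple card_bool !card_prod !card_ord => Hle.
have Hp := @poly_bound #|gstate B| c M n K k0 erefl erefl.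
have := leq_trans Hle Hp; rewrite -/E => H.
by have := leq_ltn_trans H Hn; rewrite ltnn.
Qed.

Local Close Scope ring_scope.

Theorem theorem4p9 :
  (forall (Sigma : finType) (L : seq Sigma -> Prop),
     in_weak_linear_class heisenberg L -> in_weak_linear_class sl3Z L) /\
  (exists (Sigma : finType) (L : seq Sigma -> Prop),
     in_weak_linear_class sl3Z L /\ ~ in_weak_linear_class heisenberg L).
Proof.
split.
- move=> Sigma L [A [HA [Heq Hc]]]; exists A; split => //.
  by move=> t Ht; apply/eqP; apply: heis_det; apply: HA.
- exists 'I_4, (accepts Aut); split; [exact: A_class | exact: H_not].
Qed.
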